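(* Let $(\Omega,\mathcal F,(\mathcal F_n)_{n\ge 0},\mathbb P)$ be a filtered probability space. Let $f,g:\{0,1,2,\ldots\}\to\mathbb R$ be non-decreasing functions with $-f(0)<g(0)$. (a) Let $(M_n)_{n\ge0}$ be a supermartingale with $M_n\ge -f(n)$ for all $n\ge 0$ and with $\mathbb E[M_0]\in[-f(0),g(0)]$. Then \[ \mathbb P\{\exists n\ge 0: M_n\ge g(n)\}\;\le\;1-\frac{g(0)-\mathbb E[M_0]}{g(0)+f(0)}\prod_{n=1}^\infty\frac{g(n)+f(n-1)}{g(n)+f(n)}. \] (b) For every $m\in[-f(0),g(0)]$ there exist a filtered probability space and a martingale $(M_n)_{n\ge0}$ on it with $M_n\ge -f(n)$ for all $n\ge 0$ and $\mathbb E[M_0]=m$ for which the inequality in (a) holds with equality.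
   Context: An adapted process $(M_n)_{n\ge0}$ is a supermartingale if $\mathbb E[|M_n|]<\infty$ and $\mathbb E[M_{n+1}\mid\mathcal F_n]\le M_n$ for all $n\ge 0$. *)

(* Defs.v *)
From HB Require Import structures.
From mathcomp Require Import all_boot all_order all_algebra.
From mathcomp Require Import all_classical all_reals all_analysis.
Set Implicit Arguments. Unset Strict Implicit. Unset Printing Implicit Defensive.
Import Order.TTheory GRing.Theory Num.Theory.
Import numFieldNormedType.Exports.
Local Open Scope classical_set_scope.
Local Open Scope ring_scope.

Section Defs.
Context {d : measure_display} {T : measurableType d} {R : realType}.

Definition sub_sigma_algebra (G : set (set T)) :=
  sigma_algebra setT G /\ G `<=` measurable.

Definition filtration (F : nat -> set (set T)) :=
  (forall n, sub_sigma_algebra (F n)) /\ (forall n, F n `<=` F n.+1).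

Definition G_measurable (G : set (set T)) (X : T -> R) :=
  forall B : set R, measurable B -> G (X @^-1` B).

Definition adapted (F : nat -> set (set T)) (M : nat -> T -> R) :=
  forall n, G_measurable (F n) (M n).

Definition is_cond_exp (P : probability T R) (G : set (set T)) (X Y : T -> R) :=
  [/\ G_measurable G Y, P.-integrable setT (EFin \o Y) &
      forall A, G A -> (\int[P]_(x in A) (Y x)%:E = \int[P]_(x in A) (X x)%:E)%E].

Definition supermartingale (P : probability T R) (F : nat -> set (set T))
    (M : nat -> T -> R) :=
  [/\ adapted F M, (forall n, P.-integrable setT (EFin \o M n)) &
      forall n, exists Y, is_cond_exp P (F n) (M n.+1) Y /\
        {ae P, forall x, Y x <= M n x}].

Definition martingale (P : probability T R) (F : nat -> set (set T))
    (M : nat -> T -> R) :=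
  [/\ adapted F M, (forall n, P.-integrable setT (EFin \o M n)) &
      forall n, exists Y, is_cond_exp P (F n) (M n.+1) Y /\
        {ae P, forall x, Y x = M n x}].

Definition expect (P : probability T R) (X : T -> R) : R :=
  fine (\int[P]_x (X x)%:E)%E.

End Defs.

Definition inf_prod {R : realType} (u : nat -> R) : R :=
  lim ((fun N => \prod_(1 <= n < N.+1) u n) @ \oo).

Definition bound_rhs {R : realType} (f g : nat -> R) (e0 : R) : R :=
  1 - (g 0%N - e0) / (g 0%N + f 0%N) *
      inf_prod (fun n => (g n + f n.-1) / (g n + f n)).

(* Main.v *)
Require Import Defs.
From HB Require Import structures.
From mathcomp Require Import all_boot all_order all_algebra.
From mathcomp Require Import all_classical all_reals all_analysis.
From mathcomp Require Import lra zify.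
Import Order.TTheory GRing.Theory Num.Theory.
Import numFieldNormedType.Exports.
Local Open Scope classical_set_scope.
Local Open Scope ring_scope.
Set Implicit Arguments. Unset Strict Implicit. Unset Printing Implicit Defensive.


Section Prod.
Variables (R : realType) (f g : nat -> R).
Hypothesis hf : {homo f : m n / (m <= n)%N >-> m <= n}.
Hypothesis hg : {homo g : m n / (m <= n)%N >-> m <= n}.
Hypothesis hfg : - f 0%N < g 0%N.

Let a := (fun n : nat => (g n + f n.-1) / (g n + f n)).
Definition Pi (N : nat) : R := \prod_(1 <= n < N.+1) a n.

Lemma gf_pos n : 0 < g n + f n.
Proof.
have h0 : 0 < g 0%N + f 0%N by rewrite -[f 0%N]opprK subr_gt0.
apply: (lt_le_trans h0); apply: lerD; [apply: hg|apply: hf]; done.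
Qed.

Lemma a_ge0 n : (1 <= n)%N -> 0 <= a n.
Proof.
move=> n1; rewrite /a divr_ge0 //; last exact/ltW/gf_pos.
have h0 : 0 < g 0%N + f 0%N by rewrite -[f 0%N]opprK subr_gt0.
apply: (le_trans (ltW h0)); apply: lerD; [apply: hg|apply: hf]; done.
Qed.

Lemma a_le1 n : a n <= 1.
Proof.
rewrite /a ler_pdivrMr ?gf_pos // mul1r lerD2l; apply: hf; exact: leq_pred.
Qed.

Lemma Pi0 : Pi 0 = 1.
Proof. by rewrite /Pi big_geq. Qed.

Lemma PiS N : Pi N.+1 = Pi N * a N.+1.
Proof. by rewrite /Pi big_nat_recr. Qed.

Lemma Pi_ge0 N : 0 <= Pi N.
Proof. elim: N => [|N IH]; first by rewrite Pi0. by rewrite PiS mulr_ge0 // a_ge0. Qed.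

Lemma Pi_noninc : nonincreasing_seq Pi.
Proof.
apply/nonincreasing_seqP => N; rewrite PiS.
by rewrite -[leRHS]mulr1 ler_wpM2l ?Pi_ge0 ?a_le1.
Qed.

Lemma Pi_cvg : Pi @ \oo --> inf_prod a.
Proof.
have c : cvgn Pi.
  apply: nonincreasing_is_cvgn; first exact: Pi_noninc.
  by exists 0 => _ [N _ <-]; exact: Pi_ge0.
exact: c.
Qed.

Lemma inf_prod_le N : inf_prod a <= Pi N.
Proof.
apply: nonincreasing_cvgn_ge; first exact: Pi_noninc.
apply: nonincreasing_is_cvgn; first exact: Pi_noninc.
by exists 0 => _ [M _ <-]; exact: Pi_ge0.
Qed.

Lemma inf_prod_ge0 : 0 <= inf_prod a.
Proof.
apply: limr_ge; first by apply: nonincreasing_is_cvgn; [exact: Pi_noninc|exists 0 => _ [M _ <-]; exact: Pi_ge0].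
by near=> N; exact: Pi_ge0.
Unshelve. all: by end_near.
Qed.

End Prod.


Lemma sa_setI {T : Type} (G : set (set T)) : sigma_algebra setT G ->
  forall A B, G A -> G B -> G (A `&` B).
Proof.
case=> G0 GC GU.
have GCc X : G X -> G (~` X) by move=> /GC; rewrite setTD.
move=> A B GA GB; rewrite -[A `&` B]setCK setCI; apply: (GCc).
rewrite -bigcup2E; apply: GU => -[|[|k]] /=.
- exact: GCc.
- exact: GCc.
- exact: G0.
Qed.

Section PartA.
Variables (R : realType) (f g : nat -> R).
Variables (d : measure_display) (T : measurableType d) (P : probability T R)
     (F : nat -> set (set T)) (M : nat -> T -> R).
Hypothesis hF : filtration F.
Hypothesis hM : supermartingale P F M.

Lemma F_meas n A : F n A -> measurable A.
Proof. by case: hF => /(_ n) [_ +] _; apply. Qed.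

Lemma F_mono n m A : (n <= m)%N -> F n A -> F m A.
Proof.
move=> /subnKC <-; elim: (m - n)%N => [|k IH]; first by rewrite addn0.
by move=> /IH; case: hF => _ /(_ (n + k)%N); rewrite addnS; apply.
Qed.

Lemma mM n : measurable_fun setT (M n).
Proof.
case: hM => ad _ _ _ B mB; rewrite setTI; apply: (@F_meas n); exact: ad.
Qed.

Lemma iM n A : measurable A -> P.-integrable A (EFin \o M n).
Proof.
move=> mA; case: hM => _ /(_ n) hi _; exact: integrableS hi.
Qed.

Lemma PE A : measurable A -> P A = (fine (P A))%:E.
Proof. by move=> mA; rewrite fineK // fin_num_measure. Qed.

Lemma Rint_lb n A c : measurable A -> (forall x, A x -> c <= M n x) ->
  c * fine (P A) <= \int[P]_(x in A) M n x.
Proof.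
move=> mA h; rewrite -Rintegral_cst //; apply: le_Rintegral => //.
  exact: finite_measure_integrable_cst.
exact: iM.
Qed.

Lemma super_step n A : F n A ->
  \int[P]_(x in A) M n.+1 x <= \int[P]_(x in A) M n x.
Proof.
move=> FA; have mA := F_meas FA.
case: hM => _ _ /(_ n) [Y [[GY iY hY] [N [mN PN0 sN]]]].
rewrite /Rintegral -hY //.
have mY : measurable_fun setT Y.
  move=> _ B mB; rewrite setTI; apply: (@F_meas n); exact: GY.
have iYA : P.-integrable A (EFin \o Y) by exact: integrableS iY.
rewrite (negligible_integral mN mA iYA PN0).
rewrite (negligible_integral mN mA (iM n mA) PN0).
apply: le_Rintegral.
- exact: measurableD.
- apply: integrableS iYA => //; exact: measurableD.
- apply: integrableS (iM n mA) => //; exact: measurableD.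
move=> x [Ax Nx]; apply/negP => /negP; rewrite -ltNge => hlt.
by apply: Nx; apply: sN => /=; rewrite leNgt hlt.
Qed.

Hypothesis hlow : forall n x, - f n <= M n x.

Lemma Flt n c : F n [set x | M n x < c].
Proof.
case: hM => ad _ _.
have := ad n `]-oo, c[%classic (measurable_itv _).
congr F; apply/seteqP; split=> x /=; rewrite in_itv /=; done.
Qed.

Fixpoint S n : set T :=
  if n is n'.+1 then S n' `&` [set x | M n'.+1 x < g n'.+1]
  else [set x | M 0 x < g 0].

Lemma FS n : F n (S n).
Proof.
elim: n => [|n IH] /=; first exact: Flt.
case: hF => /(_ n.+1) [sa _] _; apply: sa_setI => //.
  exact: (F_mono (leqnSn n)).
exact: Flt.
Qed.

Lemma mS n : measurable (S n).
Proof. exact: F_meas (FS n). Qed.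

Definition q n := fine (P (S n)).
Definition e n := \int[P]_(x in S n) M n x.
Definition D n := g n * q n - e n.

Lemma F1 n : - f n * q n <= e n.
Proof. by apply: Rint_lb; [exact: mS|move=> x _; exact: hlow]. Qed.

Lemma F2 : g 0 - \int[P]_x M 0 x <= D 0.
Proof.
have sU : [set: T] = S 0 `|` ~` S 0 by rewrite setUv.
rewrite sU Rintegral_setU //; try (exact: mS);
  try (by apply: measurableC; exact: mS); try (by rewrite -sU; exact: iM);
  try (by apply/disj_set2P; rewrite setICr).
have h := @Rint_lb 0%N (~` S 0) (g 0) (measurableC (mS 0)).
have : g 0 * fine (P (~` S 0)) <= \int[P]_(x in ~` S 0) M 0 x.
  by apply: h => x /= /negP; rewrite -leNgt.
rewrite (probability_setC P (mS 0)) (PE (mS 0)) -EFinB /= -/(q 0) -/(e 0) /D.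
move=> hh; rewrite mulrBr mulr1 in hh; lra.
Qed.

Lemma F3 n : e n.+1 + g n.+1 * (q n - q n.+1) <= e n.
Proof.
have sub : S n.+1 `<=` S n by move=> x [].
have sU : S n = S n.+1 `|` (S n `\` S n.+1).
  by rewrite setDUK.
apply: le_trans (super_step (FS n)).
rewrite [in X in _ <= X]sU Rintegral_setU; try (exact: mS);
  try (by apply/disj_set2P; rewrite setDE setICA setICr setI0);
  try (by rewrite -sU; apply: iM; exact: mS);
  try (by apply: measurableD; exact: mS).
rewrite -/(e n.+1) lerD2l.
have hlb := @Rint_lb n.+1 (S n `\` S n.+1) (g n.+1) (measurableD (mS n) (mS n.+1)).
apply: le_trans (hlb _); last first.
  move=> x [xS xS']; rewrite leNgt; apply/negP => hlt; apply: xS'; by split.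
suff -> : q n - q n.+1 = fine (P (S n `\` S n.+1)) by [].
rewrite measureD; try (exact: mS).
  rewrite /q setIidr // fineB //; apply: fin_num_measure; exact: mS.
by rewrite ltey_eq fin_num_measure //; exact: mS.
Qed.

Hypothesis hf : {homo f : m n / (m <= n)%N >-> m <= n}.
Hypothesis hg : {homo g : m n / (m <= n)%N >-> m <= n}.
Hypothesis hfg : - f 0%N < g 0%N.

Let E := \int[P]_x M 0 x.
Let K := (g 0 - E) / (g 0 + f 0).

Lemma q_lb n : D n / (g n + f n) <= q n.
Proof.
have hp := gf_pos hf hg hfg n.
rewrite ler_pdivrMr // /D; have := F1 n; nra.
Qed.

Lemma claim n : K * Pi f g n <= D n / (g n + f n).
Proof.
elim: n => [|n IH].
  rewrite Pi0 mulr1 /K ler_pM2r ?invr_gt0 ?(gf_pos hf hg hfg) //; exact: F2.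
have hp := gf_pos hf hg hfg n; have hp1 := gf_pos hf hg hfg n.+1.
set x := D n / (g n + f n).
have hDn : D n = x * (g n + f n) by rewrite /x divfK // gt_eqF.
have hq := q_lb n; rewrite -/x in hq.
have hgg : g n <= g n.+1 by apply: hg.
have h2 : D n + (g n.+1 - g n) * q n <= D n.+1.
  by have := F3 n; rewrite /D; nra.
have h3 : x * (g n.+1 + f n) <= D n.+1.
  apply: le_trans h2; rewrite hDn.
  have : (g n.+1 - g n) * x <= (g n.+1 - g n) * q n by apply: ler_wpM2l => //; rewrite subr_ge0.
  nra.
rewrite PiS mulrA; apply: (@le_trans _ _ (x * ((g n.+1 + f n.+1.-1) / (g n.+1 + f n.+1)))).
  by apply: ler_wpM2r => //; apply: (a_ge0 hf hg hfg).
by rewrite mulrA ler_pM2r ?invr_gt0.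
Qed.

Lemma S_iff n x : S n x <-> forall k, (k <= n)%N -> M k x < g k.
Proof.
elim: n => [|n IH] /=.
  by split=> [h k|h]; [rewrite leqn0 => /eqP -> | apply: h].
split=> [[/IH h1 h2] k|h].
  by rewrite leq_eqVlt => /predU1P[->//|]; rewrite ltnS; apply: h1.
split; last exact: h.
by apply/IH => k kn; apply: h; rewrite (leq_trans kn).
Qed.

Lemma partA_main : - f 0%N <= E <= g 0%N ->
  (P [set x | exists n, (g n <= M n x)%R] <= (bound_rhs f g E)%:E)%E.
Proof.
move=> /andP[hE1 hE2].
have K0 : 0 <= K by rewrite /K divr_ge0 ?subr_ge0 // ltW // (gf_pos hf hg hfg).
have H : [set x | exists n, (g n <= M n x)%R] = \bigcup_n ~` S n.
  apply/seteqP; split => x /=.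
    move=> [n hn]; exists n => //= /S_iff /(_ n (leqnn n)); by rewrite ltNge hn.
  move=> [n _ /= hn]; apply: contrapT => hno; apply: hn; apply/S_iff => k _.
  by rewrite ltNge; apply/negP => hk; apply: hno; exists k.
have mC n : measurable (~` S n) by apply: measurableC; exact: mS.
have nd : {homo (fun n => ~` S n) : n m / (n <= m)%N >-> (n <= m)%O}.
  move=> n m nm; rewrite subsetEset => x /= hx hm; apply: hx.
  by apply/S_iff => k kn; move/S_iff : hm; apply; rewrite (leq_trans kn).
have mU : measurable (\bigcup_n ~` S n) by apply: bigcup_measurable => n _.
have hc := @nondecreasing_cvg_mu _ _ _ P _ mC mU nd.
rewrite H -(cvg_lim _ hc) //.
apply: lime_le; first by apply/cvg_ex; eexists; exact: hc.
near=> n => /=.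
rewrite (probability_setC P (mS n)) /bound_rhs.
rewrite -/K (PE (mS n)) -EFinB lee_fin -/(q n) lerD2l lerN2.
apply: (le_trans _ (le_trans (claim n) (q_lb n))).
by apply: ler_wpM2l => //; apply: (inf_prod_le hf hg hfg).
Unshelve. all: by end_near.
Qed.

End PartA.


Lemma eseries_EFin (R : realType) (u : nat -> R) (s : R) :
  (fun N => \sum_(0 <= k < N) u k) @ \oo --> s ->
  (\sum_(k <oo) (u k)%:E = s%:E)%E.
Proof.
move=> h; apply: cvg_lim => //; apply/fine_cvgP; split.
  by near=> N; rewrite sumEFin.
apply: cvg_trans h; apply: near_eq_cvg; near=> N => /=.
by rewrite sumEFin.
Unshelve. all: by end_near.
Qed.

Section PartB.
Variables (R : realType) (f g : nat -> R).
Hypothesis hf : {homo f : m n / (m <= n)%N >-> m <= n}.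
Hypothesis hg : {homo g : m n / (m <= n)%N >-> m <= n}.
Hypothesis hfg : - f 0%N < g 0%N.
Variable m : R.
Hypothesis hm1 : - f 0%N <= m.
Hypothesis hm2 : m <= g 0%N.

Let a := (fun n : nat => (g n + f n.-1) / (g n + f n)).
Let L := inf_prod a.
Let K := (g 0%N - m) / (g 0%N + f 0%N).
Let Q n := K * Pi f g n.
Let Qinf := K * L.
Let Qp n := if n is n'.+1 then Q n' else 1.
Let w n := if n is j.+1 then Qp j - Qp j.+1 else Qinf.

Let gf0 : 0 < g 0%N + f 0%N.
Proof. by rewrite -[f 0%N]opprK subr_gt0. Qed.

Let K0 : 0 <= K.
Proof. by rewrite /K divr_ge0 ?subr_ge0 // ltW. Qed.

Let K1 : K <= 1.
Proof. by rewrite /K ler_pdivrMr // mul1r lerD2l -lerN2 opprK. Qed.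

Let Qp_noninc j : Qp j.+1 <= Qp j.
Proof.
case: j => [|j] /=; first by rewrite /Q Pi0 mulr1.
rewrite /Q ler_wpM2l //; apply: (Pi_noninc hf hg hfg); exact: leqnSn.
Qed.

Let w_ge0 n : 0 <= w n.
Proof.
rewrite /w; case: n => [|j]; last by rewrite subr_ge0 Qp_noninc.
by rewrite /Qinf mulr_ge0 // (inf_prod_ge0 hf hg hfg).
Qed.

Let Q_cvg : Q @ \oo --> Qinf.
Proof. by apply: cvgMr; exact: (Pi_cvg hf hg hfg). Qed.

Let Qp_cvg : Qp @ \oo --> Qinf.
Proof. by rewrite -cvg_shiftS /=; exact: Q_cvg. Qed.

Definition wnn n : {nonneg R} := NngNum (w_ge0 n).

Definition mub := mseries (fun k => mscale (wnn k) (@dirac _ nat k R)) 0.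

Lemma mubE A : mub A = (\sum_(k <oo) (w k * (\1_A k))%:E)%E.
Proof. by []. Qed.


Lemma ind_b (P : pred nat) k : \1_[set x | P x] k = (P k)%:R :> R.
Proof.
rewrite indicE; case: (boolP (P k)) => h; first by rewrite mem_set.
by rewrite memNset //=; apply/negP.
Qed.

Lemma sum_setT N : \sum_(0 <= k < N.+1) w k = Qinf + 1 - Qp N.
Proof.
elim: N => [|N IH]; first by rewrite big_nat1 /= addrK.
rewrite big_nat_recr //= IH /w; lra.
Qed.

Lemma mub_setT : mub setT = 1%E.
Proof.
rewrite mubE; apply: eseries_EFin; rewrite -cvg_shiftS /=.
have -> : (fun N => \sum_(0 <= k < N.+1) w k * \1_[set: nat] k) = (fun N => Qinf + 1 - Qp N).
  apply/funext => N; rewrite -sum_setT; apply: eq_bigr => k _.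
  by rewrite indicE in_setT mulr1.
have h : (fun N => Qinf + 1 - Qp N) @ \oo --> Qinf + 1 - Qinf.
  apply: cvgB; [exact: cvg_cst | exact: Qp_cvg].
have e1 : Qinf + 1 - Qinf = 1 by rewrite addrC addKr.
by rewrite e1 in h.
Qed.


Definition Z0 := [set x : nat | x == 0%N].
Definition Cb n := [set x : nat | (x == 0%N) || (n.+2 <= x)%N].

Lemma sum_Z0 N : \sum_(0 <= k < N.+1) w k * (k == 0%N)%:R = Qinf.
Proof.
elim: N => [|N IH]; first by rewrite big_nat1 /= mulr1.
by rewrite big_nat_recr //= IH mulr0 addr0.
Qed.

Lemma mub_Z0 : mub Z0 = Qinf%:E.
Proof.
rewrite mubE; apply: eseries_EFin; rewrite -cvg_shiftS /=.
have -> : (fun N => \sum_(0 <= k < N.+1) w k * \1_Z0 k) = (fun N => Qinf).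
  apply/funext => N; rewrite -(sum_Z0 N); apply: eq_bigr => k _.
  by rewrite ind_b.
exact: cvg_cst.
Qed.

Lemma sum_Cb n N : \sum_(0 <= k < N + n.+2) w k * ((k == 0%N) || (n.+2 <= k)%N)%:R
  = Qinf + Qp n.+1 - Qp (N + n.+1).
Proof.
elim: N => [|N IH].
  rewrite add0n addrK big_nat_recl // /= mulr1 big_nat_cond big1 ?addr0 //.
  move=> i /andP[/andP[_ hi] _] /=; rewrite ltnS leqNgt hi /= mulr0 //.
rewrite addSn big_nat_recr //= IH.
have -> : (n.+2 <= N + n.+2)%N by rewrite leq_addl.
rewrite orbT mulr1 !addnS /w /=; lra.
Qed.

Lemma mub_Cb n : mub (Cb n) = (Q n)%:E.
Proof.
rewrite mubE; apply: eseries_EFin; rewrite -(cvg_shiftn n.+2) /=.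
have -> : (fun N => \sum_(0 <= k < N + n.+2) w k * \1_(Cb n) k) =
  (fun N => Qinf + Qp n.+1 - Qp (N + n.+1)).
  apply/funext => N; rewrite -(sum_Cb n N); apply: eq_bigr => k _.
  by rewrite ind_b.
have h : (fun N => Qinf + Qp n.+1 - Qp (N + n.+1)) @ \oo --> Qinf + Qp n.+1 - Qinf.
  apply: cvgB; first exact: cvg_cst.
  by rewrite (cvg_shiftn n.+1 Qp); exact: Qp_cvg.
have e1 : Qinf + Qp n.+1 - Qinf = Q n by rewrite addrC addKr.
by rewrite e1 in h.
Qed.


Definition Pb := mnormalize mub (@dirac _ nat 0%N R).

Lemma PbE A : Pb A = mub A.
Proof.
have h1 : mub setT = 1%E := mub_setT.
rewrite /Pb /mnormalize; case: ifPn => [/orP[] /eqP h|_].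
- have h' : mub setT = 0%E := h.
  by rewrite h1 in h'; move: h' => /eqP; rewrite onee_eq0.
- have h' : mub setT = +oo%E := h.
  by rewrite h1 in h'.
rewrite (_ : fine _ = 1); first by rewrite invr1 mule1.
exact: (f_equal fine h1).
Qed.

Definition One := [set x : nat | x == 1%N].
Definition Two n := [set x : nat | x == n.+2].

Lemma Pb_fin A : Pb A = (fine (Pb A))%:E.
Proof. by rewrite fineK // fin_num_measure. Qed.

Lemma pb_Cb n : fine (Pb (Cb n)) = Q n.
Proof. by rewrite PbE mub_Cb. Qed.

Lemma pb_Z0 : fine (Pb Z0) = Qinf.
Proof. by rewrite PbE mub_Z0. Qed.

Lemma pb_One : fine (Pb One) = 1 - Q 0.
Proof.
have e : One `|` Cb 0 = setT.
  apply/seteqP; split => x //= _; rewrite /One /Cb /setU /=; lia.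
have d : One `&` Cb 0 = set0.
  apply/seteqP; split => x //= [/eqP ->] //.
have h : Pb (One `|` Cb 0) = (Pb One + Pb (Cb 0))%E := measureU Pb I I d.
have hT : Pb setT = 1%E := probability_setT _.
rewrite e hT (Pb_fin One) (Pb_fin (Cb 0)) pb_Cb -EFinD in h.
have {h} h : 1 = fine (Pb One) + Q 0 by apply: EFin_inj.
lra.
Qed.

Lemma pb_Two n : fine (Pb (Two n)) = Q n - Q n.+1.
Proof.
have e : Two n `|` Cb n.+1 = Cb n.
  apply/seteqP; split => x /=; rewrite /Two /Cb /setU /=; lia.
have d : Two n `&` Cb n.+1 = set0.
  apply/seteqP; split => x //= [/eqP ->]; rewrite /Cb /= => h; exfalso; lia.
have h : Pb (Two n `|` Cb n.+1) = (Pb (Two n) + Pb (Cb n.+1))%E := measureU Pb I I d.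
rewrite e (Pb_fin (Two n)) (Pb_fin (Cb n.+1)) (Pb_fin (Cb n)) !pb_Cb -EFinD in h.
have {h} h : Q n = fine (Pb (Two n)) + Q n.+1 by apply: EFin_inj.
lra.
Qed.

Definition Mb n (x : nat) : R :=
  if (x == 0%N) || (n.+2 <= x)%N then - f n else g x.-1.
Definition Fb n := [set A : set nat | Cb n `<=` A \/ A `&` Cb n = set0].

Lemma Mb_C n x : Cb n x -> Mb n x = - f n.
Proof. by rewrite /Mb /Cb /= => ->. Qed.

Lemma Mb_nC n x : ~ Cb n x -> Mb n x = g x.-1.
Proof. by rewrite /Mb /Cb /= => /negP/negbTE ->. Qed.

Lemma Mb_ge n x : - f n <= Mb n x.
Proof.
case: (boolP ((x == 0%N) || (n.+2 <= x)%N)) => h; first by rewrite Mb_C.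
rewrite Mb_nC; last by move=> /= h'; rewrite h' in h.
apply: (@le_trans _ _ (- f 0%N)); first by rewrite lerN2; apply: hf.
by apply: (le_trans (ltW hfg)); apply: hg.
Qed.

Lemma Mb_le n x : Mb n x <= g n.
Proof.
case: (boolP ((x == 0%N) || (n.+2 <= x)%N)) => h.
  rewrite Mb_C //; have := gf_pos hf hg hfg n; lra.
rewrite Mb_nC; last by move=> /= h'; rewrite h' in h.
by apply: hg; lia.
Qed.

Lemma Mb_int n A : Pb.-integrable A (EFin \o Mb n).
Proof.
apply: (@le_integrable _ _ _ Pb A I _ (EFin \o cst (`|f n| + `|g n|))).
- by move=> _ Y _; exact: I.
- move=> x _ /=; rewrite lee_fin [X in _ <= X]ger0_norm ?addr_ge0 //.
  rewrite ler_norml; apply/andP; split.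
    apply: le_trans (Mb_ge n x); rewrite lerN2 (le_trans (ler_norm _)) //.
    by rewrite lerDl.
  apply: (le_trans (Mb_le n x)); rewrite (le_trans (ler_norm _)) //.
  by rewrite lerDr.
- exact: finite_measure_integrable_cst.
Qed.

Lemma Fb_sa n : Defs.sub_sigma_algebra (Fb n).
Proof.
split => //; split.
- by right; rewrite set0I.
- move=> A [h|h].
    by right; apply/seteqP; split => x // [[_ nAx] Cx]; apply: nAx; apply: h.
  left => x Cx; split => // Ax.
  by have : (A `&` Cb n) x by []; rewrite h.
- move=> A hA; case: (pselect (exists k, Cb n `<=` A k)) => [[k hk]|hno].
    by left => x Cx; exists k => //; apply: hk.
  right; apply/seteqP; split => x // [[k _ Akx] Cx].
  case: (hA k) => [hk|hk]; first by apply: hno; exists k.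
  by have : (A k `&` Cb n) x by []; rewrite hk.
Qed.

Lemma Fb_filt : filtration Fb.
Proof.
split; first exact: Fb_sa.
move=> n A [h|h]; [left|right].
  by move=> x Cx; apply: h; move: Cx; rewrite /Cb /=; lia.
apply/seteqP; split => x // [Ax Cx].
have : (A `&` Cb n) x by split => //; move: Cx; rewrite /Cb /=; lia.
by rewrite h.
Qed.

Lemma Mb_adapted : adapted Fb Mb.
Proof.
move=> n B mB; case: (pselect (B (- f n))) => hB; [left|right].
  by move=> x Cx; rewrite /preimage /= Mb_C.
apply/seteqP; split => x // [/= Bx Cx]; apply: hB.
by rewrite -(Mb_C Cx).
Qed.


Lemma int_RI A h : Pb.-integrable A (EFin \o h) ->
  (\int[Pb]_(x in A) (h x)%:E = (\int[Pb]_(x in A) h x)%:E)%E.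
Proof. by move=> hi; rewrite /Rintegral fineK //; exact: integrable_fin_num. Qed.

Lemma RI_cst A h c : (forall x, A x -> h x = c) ->
  \int[Pb]_(x in A) h x = c * fine (Pb A).
Proof.
move=> hc; rewrite -Rintegral_cst //; apply: eq_Rintegral => x /[!inE] Ax.
exact: hc.
Qed.

Lemma Mb_step_eq n x : ~ Cb n x -> Mb n x = Mb n.+1 x.
Proof.
move=> h; rewrite Mb_nC // Mb_nC //.
by move=> h'; apply: h; move: h'; rewrite /Cb /=; lia.
Qed.

Lemma Q_rec n : Q n.+1 * (g n.+1 + f n.+1) = Q n * (g n.+1 + f n).
Proof.
rewrite /Q PiS mulrA -mulrA /a /= divfK //.
by apply: lt0r_neq0; exact: (gf_pos hf hg hfg).
Qed.

Lemma cond_exp_eq n A : Fb n A ->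
  \int[Pb]_(x in A) Mb n x = \int[Pb]_(x in A) Mb n.+1 x.
Proof.
move=> [hC|hD]; last first.
  apply: eq_Rintegral => x /[!inE] Ax; apply: Mb_step_eq => Cx.
  by have : (A `&` Cb n) x by []; rewrite hD.
have sU : A = (A `\` Cb n) `|` Cb n by rewrite setUC setDUK.
have dj : [disjoint A `\` Cb n & Cb n] by apply/disj_set2P; rewrite setDE -setIA setICl setI0.
rewrite sU !Rintegral_setU //; try exact: Mb_int.
congr (_ + _).
  apply: eq_Rintegral => x; rewrite inE => -[_ Cx]; exact: Mb_step_eq.
have e : Two n `|` Cb n.+1 = Cb n.
  apply/seteqP; split => x /=; rewrite /Two /Cb /setU /=; lia.
have dj2 : [disjoint Two n & Cb n.+1].
  apply/disj_set2P; apply/seteqP; split => x //= [/eqP ->]; rewrite /Cb /= => h; exfalso; lia.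
rewrite -{2}e Rintegral_setU //; last by rewrite e; exact: Mb_int.
rewrite (@RI_cst (Cb n) _ (- f n)); last by move=> x; exact: Mb_C.
rewrite (@RI_cst (Two n) _ (g n.+1)); last first.
  move=> x /eqP ->; rewrite Mb_nC //; rewrite /Cb /=; lia.
rewrite (@RI_cst (Cb n.+1) _ (- f n.+1)); last by move=> x; exact: Mb_C.
rewrite !pb_Cb pb_Two.
have := Q_rec n; nra.
Qed.

Lemma Mb_mart : martingale Pb Fb Mb.
Proof.
split; first exact: Mb_adapted.
  by move=> n; exact: Mb_int.
move=> n; exists (Mb n); split; last exact: aeW.
split; [exact: Mb_adapted|exact: Mb_int|].
move=> A FA; rewrite !int_RI; try exact: Mb_int.
by rewrite cond_exp_eq.
Qed.

Lemma Mb_expect : expect Pb (Mb 0) = m.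
Proof.
have e : One `|` Cb 0 = setT.
  apply/seteqP; split => x //= _; rewrite /One /Cb /setU /=; lia.
have dj : [disjoint One & Cb 0].
  by apply/disj_set2P; apply/seteqP; split => x //= [/eqP ->].
rewrite /expect -/(Rintegral Pb setT (Mb 0)) -e Rintegral_setU //; last by rewrite e; exact: Mb_int.
rewrite (@RI_cst One _ (g 0%N)); last by move=> x /eqP ->.
rewrite (@RI_cst (Cb 0) _ (- f 0%N)); last by move=> x; exact: Mb_C.
rewrite pb_One pb_Cb /Q Pi0 mulr1.
have hK : K * (g 0%N + f 0%N) = g 0%N - m by rewrite /K divfK // gt_eqF.
nra.
Qed.

Lemma Mb_hit : Pb [set x | exists n, (g n <= Mb n x)%R] = (bound_rhs f g m)%:E.
Proof.
have e : [set x | exists n, (g n <= Mb n x)%R] = ~` Z0.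
  apply/seteqP; split => x /=.
    move=> [n hn] /eqP x0; move: hn; rewrite x0 Mb_C //.
    have := gf_pos hf hg hfg n; lra.
  case: x => [/eqP //|j] _; exists j; rewrite Mb_nC //=; rewrite /Cb /=; lia.
have hC : Pb (~` Z0) = (1 - Pb Z0)%E := probability_setC Pb (I : measurable Z0).
rewrite e hC (Pb_fin Z0) pb_Z0.
by rewrite /bound_rhs.
Qed.

End PartB.


Unset Implicit Arguments.

Theorem theorem2 (R : realType) (f g : nat -> R)
  (hf : {homo f : m n / (m <= n)%N >-> m <= n})
  (hg : {homo g : m n / (m <= n)%N >-> m <= n})
  (hfg : - f 0%N < g 0%N) :
  (* (a) *)
  (forall (d : measure_display) (T : measurableType d) (P : probability T R)
     (F : nat -> set (set T)) (M : nat -> T -> R),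
     filtration F -> supermartingale P F M ->
     (forall n x, - f n <= M n x) ->
     - f 0%N <= expect P (M 0%N) <= g 0%N ->
     (P [set x | exists n, (g n <= M n x)%R] <= (bound_rhs f g (expect P (M 0%N)))%:E)%E)
  /\
  (* (b) *)
  (forall m : R, - f 0%N <= m <= g 0%N ->
     exists (d : measure_display) (T : measurableType d) (P : probability T R)
       (F : nat -> set (set T)) (M : nat -> T -> R),
       [/\ filtration F, martingale P F M,
           (forall n x, - f n <= M n x),
           expect P (M 0%N) = m &
           P [set x | exists n, (g n <= M n x)%R] = (bound_rhs f g m)%:E]).
Proof.
split.
- move=> d T P F M hF hM hlow hE.
  exact: (partA_main hF hM hlow hf hg hfg hE).
- move=> m /andP[hm1 hm2].
  exists default_measure_display, nat, (Pb hf hg hfg hm1 hm2), Fb, (Mb f g).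
  split.
  + exact: (@Fb_filt R f g hfg m hm1 hm2).
  + exact: (Mb_mart hf hg hfg hm1 hm2).
  + move=> n x; exact: (Mb_ge hf hg hfg).
  + exact: (Mb_expect hf hg hfg hm1 hm2).
  + exact: (Mb_hit hf hg hfg hm1 hm2).
Qed.
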